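(* Let $\Omega\subset\mathbb{R}^N$ be a bounded open connected set, $F:\Omega\times\mathbb{R}\times\mathcal{S}(N)\to\mathbb{R}$ continuous with $\Gamma(x):=\{(r,A):F(x,r,A)=0\}\neq\emptyset$ for each $x\in\Omega$, and let $\Phi$ be a proper elliptic map on $\Omega$ such that $F(x,r+s,A+P)\ge F(x,r,A)$ for all $x\in\Omega$, $(r,A)\in\Phi(x)$, $(s,P)\in\mathcal{Q}$. Assume that $\Phi(x)\cap\Gamma(x)\neq\emptyset$ for each $x\in\Omega$ and that $\partial\Phi(x)\subset\{(r,A)\in\mathbb{R}\times\mathcal{S}(N):F(x,r,A)\le 0\}$ for each $x\in\Omega$. Then the map $\Theta(x):=\{(r,A)\in\Phi(x):F(x,r,A)\ge 0\}$ is a proper elliptic map and $\partial\Theta(x)\subset\Gamma(x)$ for every $x\in\Omega$ (i.e. $\Theta$ defines a proper elliptic branch of $F(x,u,D^2u)=0$).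
   Context: $\mathcal{S}(N)$: real symmetric $N\times N$ matrices with the usual partial order. $\mathcal{Q}:=\{(s,P)\in\mathbb{R}\times\mathcal{S}(N): s\le0,\ P\ge0\}$. A proper elliptic map $\Phi$ on $\Omega$ assigns to each $x\in\Omega$ a closed, nonempty set $\Phi(x)\subsetneq\mathbb{R}\times\mathcal{S}(N)$ with $\Phi(x)+\mathcal{Q}\subset\Phi(x)$. $\partial$ denotes topological boundary in $\mathbb{R}\times\mathcal{S}(N)$. *)

(* Defs.v *)
From HB Require Import structures.
From mathcomp Require Import all_boot all_order all_algebra.
From mathcomp Require Import all_classical all_reals all_analysis.
Set Implicit Arguments. Unset Strict Implicit. Unset Printing Implicit Defensive.
Import Order.TTheory GRing.Theory Num.Theory.
Import numFieldNormedType.Exports.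
Local Open Scope classical_set_scope.
Local Open Scope ring_scope.

(* S(N) is represented as the symmetric matrices inside 'M[R]_N; the space
   R x S(N) is the set [symspace R N] inside the topological space R * 'M[R]_N,
   equipped with the subspace topology. *)

Definition symmx (R : realType) (N : nat) (A : 'M[R]_N) : Prop := A^T = A.

Definition symspace (R : realType) (N : nat) : set (R * 'M[R]_N) :=
  [set p | symmx p.2].
Arguments symspace : clear implicits.

Definition psd (R : realType) (N : nat) (P : 'M[R]_N) : Prop :=
  forall v : 'cV[R]_N, 0 <= (v^T *m P *m v) 0 0.

Definition Qcone (R : realType) (N : nat) : set (R * 'M[R]_N) :=
  [set p | p.1 <= 0 /\ symmx p.2 /\ psd p.2].
Arguments Qcone : clear implicits.

Definition msum (R : realType) (N : nat) (S T : set (R * 'M[R]_N))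
  : set (R * 'M[R]_N) :=
  [set p | exists a b, S a /\ T b /\ p = (a.1 + b.1, a.2 + b.2)].

Definition rel_closed (T : topologicalType) (D S : set T) : Prop :=
  closure S `&` D `<=` S.

Definition rel_boundary (T : topologicalType) (D S : set T) : set T :=
  [set p | D p /\ forall U, nbhs p U ->
     (U `&` S !=set0) /\ (U `&` (D `\` S) !=set0)].

Definition proper_elliptic_map (R : realType) (N : nat)
  (Omega : set 'rV[R]_N) (Phi : 'rV[R]_N -> set (R * 'M[R]_N)) : Prop :=
  forall x, Omega x ->
    [/\ Phi x `<=` symspace R N,
        rel_closed (symspace R N) (Phi x),
        Phi x !=set0,
        Phi x <> symspace R N
      & msum (Phi x) (Qcone R N) `<=` Phi x].

(* Main.v *)
Require Import Defs.
From HB Require Import structures.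
From mathcomp Require Import all_boot all_order all_algebra.
From mathcomp Require Import all_classical all_reals all_analysis.
Import Order.TTheory GRing.Theory Num.Theory.
Import numFieldNormedType.Exports.
Local Open Scope classical_set_scope.
Local Open Scope ring_scope.

Lemma sec (R : realType) (N : nat) (Omega : set 'rV[R]_N)
  (F : 'rV[R]_N -> R -> 'M[R]_N -> R) :
  {within [set q : 'rV[R]_N * (R * 'M[R]_N) | Omega q.1 /\ symmx q.2.2],
     continuous (fun q => F q.1 q.2.1 q.2.2)} ->
  forall x (p : R * 'M[R]_N), Omega x -> symmx p.2 ->
  forall V : set R, nbhs (F x p.1 p.2) V ->
  nbhs p [set q | symmx q.2 -> V (F x q.1 q.2)].
Proof.
move=> Hc x p Ox Sp V HV.
have H : within [set q : 'rV[R]_N * (R * 'M[R]_N) | Omega q.1 /\ symmx q.2.2] (nbhs (x, p))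
    ((fun q : 'rV[R]_N * (R * 'M[R]_N) => F q.1 q.2.1 q.2.2) @^-1` V).
  rewrite nbhs_subspace_in; last by split.
  exact: (Hc (x, p) _ HV).
have Hg : (fun p' : R * 'M[R]_N => (x, p')) @ nbhs p --> nbhs (x, p).
  apply: (@cvg_pair _ _ _ (nbhs p) (nbhs x) (nbhs p)). exact: cvg_cst. exact: cvg_id.
have H2 := Hg _ H.
have H3 : nbhs p [set q : R * 'M[R]_N | (Omega x /\ symmx q.2) -> V (F x q.1 q.2)] := H2.
apply: filterS H3 => q /= Hq Sq.
exact: Hq.
Qed.

Theorem theorem6p3 (R : realType) (N : nat) (Omega : set 'rV[R]_N)
  (F : 'rV[R]_N -> R -> 'M[R]_N -> R) (Phi : 'rV[R]_N -> set (R * 'M[R]_N)) :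
  open Omega -> bounded_set Omega -> connected Omega ->
  {within [set q : 'rV[R]_N * (R * 'M[R]_N) | Omega q.1 /\ symmx q.2.2],
     continuous (fun q => F q.1 q.2.1 q.2.2)} ->
  (forall x, Omega x -> [set p | symmx p.2 /\ F x p.1 p.2 = 0] !=set0) ->
  proper_elliptic_map Omega Phi ->
  (forall x r A s P, Omega x -> Phi x (r, A) -> Qcone R N (s, P) ->
     F x r A <= F x (r + s) (A + P)) ->
  (forall x, Omega x ->
     Phi x `&` [set p | symmx p.2 /\ F x p.1 p.2 = 0] !=set0) ->
  (forall x, Omega x ->
     rel_boundary (symspace R N) (Phi x) `<=` [set p | F x p.1 p.2 <= 0]) ->
  let Theta := fun x => [set p | Phi x p /\ 0 <= F x p.1 p.2] in
  proper_elliptic_map Omega Theta /\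
  (forall x, Omega x ->
     rel_boundary (symspace R N) (Theta x) `<=`
       [set p | symmx p.2 /\ F x p.1 p.2 = 0]).
Proof.
move=> _ _ _ Hc _ HPhi Hmono HG Hbd Theta.
have Hcl : forall x, Omega x -> rel_closed (symspace R N) (Theta x).
  move=> x Ox; have [HS HclP _ _ _] := HPhi x Ox.
  move=> p [Cp Sp].
  have Pp : Phi x p.
    apply: HclP; split=> //; apply: (closureS _ Cp) => q [].  by [].
  split=> //; rewrite leNgt; apply/negP => Hlt.
  have HV : nbhs (F x p.1 p.2) [set y : R | y < 0].
    by apply: open_nbhs_nbhs; split; [exact: open_lt | exact: Hlt].
  have W := @sec _ _ _ _ Hc _ _ Ox Sp _ HV.
  have [q [[Pq Fq] Wq]] := Cp _ W.
  have := Wq (HS _ Pq); rewrite /= => Hq.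
  by move: (le_lt_trans Fq Hq); rewrite ltxx.
split.
  move=> x Ox; have [HS HclP Hne Hneq Hsum] := HPhi x Ox.
  split.
  - by move=> p [Pp _]; exact: HS.
  - exact: Hcl.
  - have [p [Pp [Sp F0]]] := HG x Ox; exists p; split=> //; by rewrite F0.
  - move=> E; apply: Hneq; apply/seteqP; split; first exact: HS.
    move=> p Sp; have : Theta x p by rewrite E.
    by case.
  - move=> p [a [b [[Pa Fa] [Qb ->]]]]; split.
      by apply: Hsum; exists a, b.
    case: a Pa Fa => r A Pa Fa; case: b Qb => s P Qb /=.
    exact: le_trans Fa (Hmono x r A s P Ox Pa Qb).
move=> x Ox p [Sp Hb].
have Cp : closure (Theta x) p.
  by move=> B NB; have [[q [Tq Bq]] _] := Hb B NB; exists q.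
have [_ Fge] := Hcl x Ox p (conj Cp Sp).
split=> //; apply/eqP; rewrite eq_le Fge andbT.
rewrite leNgt; apply/negP => Hgt.
have HV : nbhs (F x p.1 p.2) [set y : R | 0 < y].
  by apply: open_nbhs_nbhs; split; [exact: open_gt | exact: Hgt].
have W := @sec _ _ _ _ Hc _ _ Ox Sp _ HV.
have Hbp : rel_boundary (symspace R N) (Phi x) p.
  split=> // U NU.
  have NUW : nbhs p (U `&` [set q : R * 'M[R]_N | symmx q.2 -> 0 < F x q.1 q.2]).
    exact: filterI.
  have [[q [[Uq Wq] Tq]] [q' [[Uq' Wq'] [Sq' nTq']]]] := Hb _ NUW.
  split.
    by exists q; split=> //; case: Tq.
  exists q'; split=> //; split=> // Pq'; apply: nTq'; split=> //.
  exact: ltW (Wq' Sq').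
have := Hbd x Ox p Hbp; rewrite /= => Hle.
by move: (lt_le_trans Hgt Hle); rewrite ltxx.
Qed.
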